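(* Let $X$ be a complex separable Hilbert space, $A\in\mathcal B(X)$, $0<\tau<\infty$, and let $\mathcal G\subset X$ be a countable Bessel system. The following are equivalent: (1) $\{e^{tA^*}g\}_{g\in\mathcal G,\,t\in[0,\tau)}$ is a semi-continuous frame for $X$; (2) there exists $\delta>0$ such that for every finite set $T=\{t_1,\dots,t_n\}$ with $0=t_1<t_2<\dots<t_n\le t_{n+1}:=\tau$ and $|t_{i+1}-t_i|<\delta$ for all $i\in\{1,\dots,n\}$, the system $\{e^{tA^*}g\}_{g\in\mathcal G,\,t\in T}$ is a frame for $X$; (3) there exists a finite set $T=\{t_1,\dots,t_n\}$ with $0=t_1<t_2<\dots<t_n\le\tau$ such that $\{e^{tA^*}g\}_{g\in\mathcal G,\,t\in T}$ is a frame for $X$.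
   Context: $e^{tA^*}=\sum_{n\ge0}(tA^* )^n/n!$. A countable family $\{f_j\}$ in $X$ is a Bessel system if $\sum_j|\langle x,f_j\rangle|^2\le C\|x\|^2$ for all $x$, and a frame if additionally $\sum_j|\langle x,f_j\rangle|^2\ge c\|x\|^2$ for some $c>0$. The family $\{e^{tA^*}g\}_{g\in\mathcal G,t\in[0,\tau)}$ is a semi-continuous frame if there are $c_1,c_2>0$ with $c_1\|x\|^2\le\sum_{g\in\mathcal G}\int_0^\tau|\langle x,e^{tA^*}g\rangle|^2dt\le c_2\|x\|^2$ for all $x\in X$. *)

(* Defs.v *)
From Stdlib Require Import Reals Lra List Factorial ClassicalEpsilon.
Open Scope R_scope.

Record C := mkC { Re : R; Im : R }.
Definition C0 : C := mkC 0 0.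
Definition C1 : C := mkC 1 0.
Definition RtoC (r : R) : C := mkC r 0.
Definition Cadd (z w : C) : C := mkC (Re z + Re w) (Im z + Im w).
Definition Cmul (z w : C) : C :=
  mkC (Re z * Re w - Im z * Im w) (Re z * Im w + Im z * Re w).
Definition Cconj (z : C) : C := mkC (Re z) (- Im z).
Definition Cabs2 (z : C) : R := Re z * Re z + Im z * Im z.

(* ---------- complex Hilbert spaces (separable) ----------
   inner product linear in the first argument, conjugate-linear in the second *)
Record HilbertSpace := {
  hs_car :> Type;
  hs_zero : hs_car;
  hs_add : hs_car -> hs_car -> hs_car;
  hs_opp : hs_car -> hs_car;
  hs_scal : C -> hs_car -> hs_car;
  hs_inner : hs_car -> hs_car -> C;
  hs_add_assoc : forall x y z, hs_add x (hs_add y z) = hs_add (hs_add x y) z;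
  hs_add_comm : forall x y, hs_add x y = hs_add y x;
  hs_add_zero : forall x, hs_add x hs_zero = x;
  hs_add_opp : forall x, hs_add x (hs_opp x) = hs_zero;
  hs_scal_one : forall x, hs_scal C1 x = x;
  hs_scal_assoc : forall a b x, hs_scal a (hs_scal b x) = hs_scal (Cmul a b) x;
  hs_scal_distr_v : forall a x y, hs_scal a (hs_add x y) = hs_add (hs_scal a x) (hs_scal a y);
  hs_scal_distr_c : forall a b x, hs_scal (Cadd a b) x = hs_add (hs_scal a x) (hs_scal b x);
  hs_inner_conj : forall x y, hs_inner y x = Cconj (hs_inner x y);
  hs_inner_add_l : forall x y z, hs_inner (hs_add x y) z = Cadd (hs_inner x z) (hs_inner y z);
  hs_inner_scal_l : forall a x y, hs_inner (hs_scal a x) y = Cmul a (hs_inner x y);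
  hs_inner_pos : forall x, 0 <= Re (hs_inner x x);
  hs_inner_def : forall x, Re (hs_inner x x) = 0 -> x = hs_zero;
  hs_complete : forall u : nat -> hs_car,
    (forall eps, eps > 0 -> exists N, forall m n, (N <= m)%nat -> (N <= n)%nat ->
       sqrt (Re (hs_inner (hs_add (u m) (hs_opp (u n))) (hs_add (u m) (hs_opp (u n))))) < eps) ->
    exists l, forall eps, eps > 0 -> exists N, forall n, (N <= n)%nat ->
       sqrt (Re (hs_inner (hs_add (u n) (hs_opp l)) (hs_add (u n) (hs_opp l)))) < eps;
  hs_separable : exists d : nat -> hs_car, forall x eps, eps > 0 -> exists n,
       sqrt (Re (hs_inner (hs_add x (hs_opp (d n))) (hs_add x (hs_opp (d n))))) < eps
}.

Arguments hs_zero {h}.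
Arguments hs_add {h}.
Arguments hs_opp {h}.
Arguments hs_scal {h}.
Arguments hs_inner {h}.

Definition hs_norm {X : HilbertSpace} (x : X) : R := sqrt (Re (hs_inner x x)).
Definition hs_sub {X : HilbertSpace} (x y : X) : X := hs_add x (hs_opp y).

Definition cv_X {X : HilbertSpace} (u : nat -> X) (l : X) : Prop :=
  forall eps, eps > 0 -> exists N, forall n, (N <= n)%nat -> hs_norm (hs_sub (u n) l) < eps.

Definition is_bounded_op {X : HilbertSpace} (A : X -> X) : Prop :=
  (forall x y, A (hs_add x y) = hs_add (A x) (A y)) /\
  (forall a x, A (hs_scal a x) = hs_scal a (A x)) /\
  (exists M, forall x, hs_norm (A x) <= M * hs_norm x).

Definition is_adjoint {X : HilbertSpace} (A B : X -> X) : Prop :=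
  forall x y, hs_inner (A x) y = hs_inner x (B y).

Fixpoint exp_partial {X : HilbertSpace} (B : X -> X) (t : R) (x : X) (N : nat) : X :=
  match N with
  | O => x
  | S M => hs_add (exp_partial B t x M)
                  (hs_scal (RtoC (t ^ S M / INR (fact (S M)))) (Nat.iter (S M) B x))
  end.

(* E t = e^{tB} = sum_{n>=0} (tB)^n/n!  (the series converges in operator norm;
   here E t x is characterised as the norm limit of the series applied to x) *)
Definition is_exp {X : HilbertSpace} (B : X -> X) (E : R -> X -> X) : Prop :=
  forall t x, cv_X (fun N => exp_partial B t x N) (E t x).

Definition sum_list {J : Type} (w : J -> R) (l : list J) : R :=
  fold_right (fun a s => w a + s) 0 l.

Definition sum_le {J : Type} (D : J -> Prop) (w : J -> R) (B : R) : Prop :=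
  forall l, NoDup l -> Forall D l -> sum_list w l <= B.

(* sum_{j in D} w j >= B  (the sum being the sup of finite partial sums) *)
Definition sum_ge {J : Type} (D : J -> Prop) (w : J -> R) (B : R) : Prop :=
  forall eps, eps > 0 -> exists l, NoDup l /\ Forall D l /\ B - eps < sum_list w l.

Definition countable_set {J : Type} (D : J -> Prop) : Prop :=
  exists f : J -> nat, forall x y, D x -> D y -> f x = f y -> x = y.

Definition is_bessel {X : HilbertSpace} {J : Type} (D : J -> Prop) (F : J -> X) : Prop :=
  exists Cb, forall x : X, sum_le D (fun j => Cabs2 (hs_inner x (F j))) (Cb * hs_norm x ^ 2).

Definition is_frame {X : HilbertSpace} {J : Type} (D : J -> Prop) (F : J -> X) : Prop :=
  is_bessel D F /\
  exists c, c > 0 /\ forall x : X, sum_ge D (fun j => Cabs2 (hs_inner x (F j))) (c * hs_norm x ^ 2).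

(* Riemann integral (the integrands below are continuous, hence integrable) *)
Definition RInt (f : R -> R) (a b : R) : R :=
  match excluded_middle_informative (inhabited (Riemann_integrable f a b)) with
  | left H => RiemannInt (epsilon H (fun _ => True))
  | right _ => 0
  end.

Definition semicont_frame {X : HilbertSpace} (E : R -> X -> X) (G : X -> Prop) (tau : R) : Prop :=
  exists c1 c2, c1 > 0 /\ c2 > 0 /\ forall x : X,
    sum_ge G (fun g => RInt (fun t => Cabs2 (hs_inner x (E t g))) 0 tau) (c1 * hs_norm x ^ 2) /\
    sum_le G (fun g => RInt (fun t => Cabs2 (hs_inner x (E t g))) 0 tau) (c2 * hs_norm x ^ 2).

Definition sample_set (tau : R) (T : list R) : Prop :=
  (1 <= length T)%nat /\ nth 0 T 0 = 0 /\
  (forall i, (S i < length T)%nat -> nth i T 0 < nth (S i) T 0) /\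
  nth (length T - 1) T 0 <= tau.

Definition mesh_lt (tau delta : R) (T : list R) : Prop :=
  (forall i, (S i < length T)%nat -> Rabs (nth (S i) T 0 - nth i T 0) < delta) /\
  Rabs (tau - nth (length T - 1) T 0) < delta.

Definition disc_frame {X : HilbertSpace} (E : R -> X -> X) (G : X -> Prop) (T : list R) : Prop :=
  is_frame (fun p : X * R => G (fst p) /\ In (snd p) T) (fun p => E (snd p) (fst p)).

(* Main.v *)
Require Import Defs.
From Stdlib Require Import Reals List.
Open Scope R_scope.
From Stdlib Require Import Lra Lia ZArith Factorial ClassicalEpsilon FunctionalExtensionality.

Section HS.
Variable X : HilbertSpace.
Implicit Types x y z u v w : X.

Lemma Ceq (a b : Defs.C) : Re a = Re b -> Im a = Im b -> a = b.
Proof. destruct a, b; simpl; intros; subst; reflexivity. Qed.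

Lemma ReL_add x y z : Re (hs_inner (hs_add x y) z) = Re (hs_inner x z) + Re (hs_inner y z).
Proof. rewrite hs_inner_add_l; reflexivity. Qed.
Lemma ImL_add x y z : Im (hs_inner (hs_add x y) z) = Im (hs_inner x z) + Im (hs_inner y z).
Proof. rewrite hs_inner_add_l; reflexivity. Qed.
Lemma Re_sym x y : Re (hs_inner x y) = Re (hs_inner y x).
Proof. rewrite (hs_inner_conj X x y); simpl; ring. Qed.
Lemma Im_sym x y : Im (hs_inner x y) = - Im (hs_inner y x).
Proof. rewrite (hs_inner_conj X x y); simpl; ring. Qed.
Lemma ReR_add x y z : Re (hs_inner x (hs_add y z)) = Re (hs_inner x y) + Re (hs_inner x z).
Proof. rewrite !(Re_sym x), ReL_add; reflexivity. Qed.
Lemma ImR_add x y z : Im (hs_inner x (hs_add y z)) = Im (hs_inner x y) + Im (hs_inner x z).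
Proof. rewrite !(Im_sym x), ImL_add; ring. Qed.
Lemma ReL_scal a x y : Re (hs_inner (hs_scal a x) y) = Re a * Re (hs_inner x y) - Im a * Im (hs_inner x y).
Proof. rewrite hs_inner_scal_l; reflexivity. Qed.
Lemma ImL_scal a x y : Im (hs_inner (hs_scal a x) y) = Re a * Im (hs_inner x y) + Im a * Re (hs_inner x y).
Proof. rewrite hs_inner_scal_l; reflexivity. Qed.
Lemma ReR_scal a x y : Re (hs_inner x (hs_scal a y)) = Re a * Re (hs_inner x y) + Im a * Im (hs_inner x y).
Proof. rewrite Re_sym, ReL_scal, (Re_sym y), (Im_sym y); ring. Qed.
Lemma ImR_scal a x y : Im (hs_inner x (hs_scal a y)) = Re a * Im (hs_inner x y) - Im a * Re (hs_inner x y).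
Proof. rewrite Im_sym, ImL_scal, (Re_sym y), (Im_sym y); ring. Qed.

Lemma zero_l y : Re (hs_inner hs_zero y) = 0 /\ Im (hs_inner hs_zero y) = 0.
Proof.
  assert (H := ReL_add hs_zero hs_zero y). assert (H' := ImL_add hs_zero hs_zero y).
  rewrite hs_add_zero in H, H'. split; lra.
Qed.
Lemma zero_r y : Re (hs_inner y hs_zero) = 0 /\ Im (hs_inner y hs_zero) = 0.
Proof. rewrite Re_sym, Im_sym. destruct (zero_l y); split; lra. Qed.
Lemma ReL_opp x y : Re (hs_inner (hs_opp x) y) = - Re (hs_inner x y).
Proof. assert (H := ReL_add x (hs_opp x) y). rewrite hs_add_opp in H. destruct (zero_l y); lra. Qed.
Lemma ImL_opp x y : Im (hs_inner (hs_opp x) y) = - Im (hs_inner x y).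
Proof. assert (H := ImL_add x (hs_opp x) y). rewrite hs_add_opp in H. destruct (zero_l y); lra. Qed.
Lemma ReR_opp x y : Re (hs_inner x (hs_opp y)) = - Re (hs_inner x y).
Proof. rewrite Re_sym, ReL_opp, Re_sym; ring. Qed.
Lemma ImR_opp x y : Im (hs_inner x (hs_opp y)) = - Im (hs_inner x y).
Proof. rewrite Im_sym, ImL_opp, Im_sym; ring. Qed.
Lemma Im_self x : Im (hs_inner x x) = 0.
Proof. assert (H := Im_sym x x); lra. Qed.

Lemma inner_ext u v : (forall z, Re (hs_inner u z) = Re (hs_inner v z) /\ Im (hs_inner u z) = Im (hs_inner v z)) -> u = v.
Proof.
  intros H. set (w := hs_add u (hs_opp v)).
  assert (Hw : w = hs_zero).
  { apply hs_inner_def. unfold w at 1. rewrite ReL_add, ReL_opp. destruct (H w); lra. }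
  assert (E : hs_add w v = u).
  { unfold w. rewrite <- hs_add_assoc, (hs_add_comm X _ v), hs_add_opp, hs_add_zero. reflexivity. }
  rewrite <- E, Hw, hs_add_comm, hs_add_zero. reflexivity.
Qed.

Lemma norm_pos x : 0 <= hs_norm x.
Proof. apply sqrt_pos. Qed.
Lemma norm_sq x : hs_norm x ^ 2 = Re (hs_inner x x).
Proof. unfold hs_norm. rewrite pow2_sqrt; [reflexivity|apply hs_inner_pos]. Qed.

Lemma CS_Re u v : Rabs (Re (hs_inner u v)) <= hs_norm u * hs_norm v.
Proof.
  destruct (Req_dec (Re (hs_inner v v)) 0) as [H0|H0].
  - apply hs_inner_def in H0. subst v. destruct (zero_r u) as [-> _]. rewrite Rabs_R0.
    apply Rmult_le_pos; apply norm_pos.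
  - set (a := Re (hs_inner u u)). set (b := Re (hs_inner u v)). set (c := Re (hs_inner v v)).
    assert (Hc : 0 < c) by (pose proof (hs_inner_pos X v); unfold c in *; lra).
    assert (Hq : forall l, 0 <= a + 2 * l * b + l * l * c).
    { intro l. pose proof (hs_inner_pos X (hs_add u (hs_scal (RtoC l) v))).
      rewrite ReL_add, !ReR_add, !ReL_scal, !ReR_scal in H. simpl in H.
      rewrite (Re_sym v u) in H. unfold a, b, c. nra. }
    specialize (Hq (- b / c)).
    assert (Hb : b * b <= a * c).
    { replace (a + 2 * (- b / c) * b + - b / c * (- b / c) * c) with (a - b * b / c) in Hq by (field; lra).
      apply Rmult_le_reg_r with (/ c). apply Rinv_0_lt_compat; lra.
      replace (a * c * / c) with a by (field; lra). unfold Rdiv in Hq. lra. }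
    unfold hs_norm. rewrite <- sqrt_mult by (apply hs_inner_pos).
    rewrite <- sqrt_Rsqr_abs. apply sqrt_le_1_alt. unfold Rsqr. fold a c. lra.
Qed.

Definition iC : Defs.C := mkC 0 1.
Lemma Im_as_Re u v : Im (hs_inner u v) = Re (hs_inner u (hs_scal iC v)).
Proof. rewrite ReR_scal; simpl; ring. Qed.
Lemma norm_iC v : hs_norm (hs_scal iC v) = hs_norm v.
Proof. unfold hs_norm. f_equal. rewrite ReL_scal, ReR_scal, ImR_scal, Im_self. simpl. ring. Qed.
Lemma CS_Im u v : Rabs (Im (hs_inner u v)) <= hs_norm u * hs_norm v.
Proof. rewrite Im_as_Re, <- (norm_iC v). apply CS_Re. Qed.

Lemma norm_scal r v : hs_norm (hs_scal (RtoC r) v) = Rabs r * hs_norm v.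
Proof.
  unfold hs_norm. rewrite ReL_scal, ReR_scal, ImR_scal, Im_self. simpl.
  replace (r * (r * Re (hs_inner v v) + 0 * 0) - 0 * (r * 0 - 0 * Re (hs_inner v v)))
    with (Rsqr r * Re (hs_inner v v)) by (unfold Rsqr; ring).
  rewrite sqrt_mult by (apply Rle_0_sqr || apply hs_inner_pos). rewrite sqrt_Rsqr_abs. reflexivity.
Qed.

Lemma hs_triangle u v : hs_norm (hs_add u v) <= hs_norm u + hs_norm v.
Proof.
  apply Rsqr_incr_0_var; [|apply Rplus_le_le_0_compat; apply norm_pos].
  unfold Rsqr.
  assert (E : forall w, hs_norm w * hs_norm w = Re (hs_inner w w)) by (intro w; rewrite <- norm_sq; ring).
  rewrite E, ReL_add, !ReR_add, (Re_sym v u), <- !E.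
  pose proof (CS_Re u v). pose proof (Rle_abs (Re (hs_inner u v))). nra.
Qed.

End HS.

Ltac isimp := repeat first [rewrite ReL_add|rewrite ReR_add|rewrite ReL_opp|rewrite ReR_opp
  |rewrite ImL_add|rewrite ImR_add|rewrite ImL_opp|rewrite ImR_opp
  |rewrite ReL_scal|rewrite ReR_scal|rewrite ImL_scal|rewrite ImR_scal].


Lemma norm_sub_sym (X : HilbertSpace) (u v : X) : hs_norm (hs_sub u v) = hs_norm (hs_sub v u).
Proof.
  unfold hs_norm, hs_sub. f_equal. isimp. rewrite (Re_sym X u v). ring.
Qed.


Fixpoint ps (y : R) (N : nat) : R :=
  match N with O => 0 | S n => ps y n + y ^ n / INR (fact n) end.

Lemma ps_sum y N : ps y (S N) = sum_f_R0 (fun i => / INR (fact i) * y ^ i) N.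
Proof.
  induction N.
  - simpl. unfold Rdiv. rewrite Rinv_1. ring.
  - change (ps y (S (S N))) with (ps y (S N) + y ^ (S N) / INR (fact (S N))).
    rewrite IHN, tech5. unfold Rdiv. ring.
Qed.

Lemma ps_le_exp y N : 0 <= y -> ps y N <= exp y.
Proof.
  intro Hy. destruct N.
  - simpl. left; apply exp_pos.
  - rewrite ps_sum. apply growing_ineq.
    + intro n. rewrite tech5. assert (0 <= / INR (fact (S n)) * y ^ (S n)).
      { apply Rmult_le_pos. left; apply Rinv_0_lt_compat, lt_0_INR, lt_O_fact.
        apply pow_le; lra. }
      lra.
    + unfold exp. destruct (exist_exp y) as [l Hl]. simpl. exact Hl.
Qed.

Lemma ps_mono y N : 0 <= y -> ps y N <= ps y (S N).
Proof.
  intro Hy. simpl. assert (0 <= y ^ N / INR (fact N)).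
  { apply Rmult_le_pos. apply pow_le; lra. left; apply Rinv_0_lt_compat, lt_0_INR, lt_O_fact. }
  lra.
Qed.

Lemma limit_le (a : nat -> R) l B : Un_cv a l -> (forall n, a n <= B) -> l <= B.
Proof.
  intros H HB. destruct (Rle_lt_dec l B) as [|Hlt]; [assumption|].
  destruct (H (l - B)) as [N HN]; [lra|]. specialize (HN N (le_n N)).
  unfold Rdist in HN. specialize (HB N). apply Rabs_def2 in HN. lra.
Qed.

Lemma pow_diff t s R n : Rabs t <= R -> Rabs s <= R ->
  Rabs (t ^ S n - s ^ S n) <= INR (S n) * R ^ n * Rabs (t - s).
Proof.
  intros Ht Hs. assert (HR : 0 <= R) by (pose proof (Rabs_pos t); lra).
  induction n.
  - simpl. rewrite !Rmult_1_r. lra.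
  - replace (t ^ S (S n) - s ^ S (S n)) with (t * (t ^ S n - s ^ S n) + s ^ S n * (t - s)) by (simpl; ring).
    eapply Rle_trans; [apply Rabs_triang|]. rewrite !Rabs_mult.
    assert (H1 : Rabs (s ^ S n) <= R ^ S n) by (rewrite <- RPow_abs; apply pow_incr; split; [apply Rabs_pos|assumption]).
    assert (H2 : Rabs t * Rabs (t ^ S n - s ^ S n) <= R * (INR (S n) * R ^ n * Rabs (t - s))).
    { apply Rmult_le_compat; try apply Rabs_pos; assumption. }
    assert (H3 : Rabs (s ^ S n) * Rabs (t - s) <= R ^ S n * Rabs (t - s)).
    { apply Rmult_le_compat_r; [apply Rabs_pos|assumption]. }
    rewrite (S_INR (S n)). change (R ^ S n) with (R * R ^ n) in *. nra.
Qed.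

Lemma sum_ext {J : Type} (f g : J -> R) l : (forall j, f j = g j) -> sum_list f l = sum_list g l.
Proof. intro H. induction l; simpl; [reflexivity| rewrite H, IHl; reflexivity]. Qed.

Definition Csub (z w : Defs.C) : Defs.C := mkC (Re z - Re w) (Im z - Im w).

Section Core.
Variable X : HilbertSpace.
Variables (A Astar : X -> X) (E : R -> X -> X).
Hypothesis HA : is_bounded_op A.
Hypothesis Hadj : is_adjoint A Astar.
Hypothesis Hexp : is_exp Astar E.

Lemma iter_comm n x : Nat.iter n A (A x) = A (Nat.iter n A x).
Proof. induction n; simpl; [reflexivity| rewrite IHn; reflexivity]. Qed.

Lemma adj_iter n x g : hs_inner x (Nat.iter n Astar g) = hs_inner (Nat.iter n A x) g.
Proof.
  revert x. induction n; intro x; [reflexivity|].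
  simpl. rewrite <- Hadj, IHn, iter_comm. reflexivity.
Qed.

Lemma adj_exp t N x g : hs_inner x (exp_partial Astar t g N) = hs_inner (exp_partial A t x N) g.
Proof.
  induction N; [reflexivity|].
  cbn [exp_partial]. apply Ceq.
  - isimp. rewrite (adj_iter (S N)). simpl Re; simpl Im. rewrite IHN. ring.
  - isimp. rewrite (adj_iter (S N)). simpl Re; simpl Im. rewrite IHN. ring.
Qed.

Definition M0 : R := Rabs (proj1_sig (constructive_indefinite_description _ (proj2 (proj2 HA)))).
Lemma M0_pos : 0 <= M0. Proof. apply Rabs_pos. Qed.
Lemma A_bound x : hs_norm (A x) <= M0 * hs_norm x.
Proof.
  unfold M0. destruct (constructive_indefinite_description _ _) as [M HM]. simpl.
  eapply Rle_trans; [apply HM|]. apply Rmult_le_compat_r; [apply norm_pos| apply Rle_abs].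
Qed.
Lemma iter_bound n x : hs_norm (Nat.iter n A x) <= M0 ^ n * hs_norm x.
Proof.
  induction n; simpl; [lra|]. eapply Rle_trans; [apply A_bound|].
  rewrite Rmult_assoc. apply Rmult_le_compat_l; [apply M0_pos|assumption].
Qed.

Lemma fact_pos n : 0 < INR (fact n). Proof. apply lt_0_INR, lt_O_fact. Qed.

Lemma P_bound t R x N : Rabs t <= R ->
  hs_norm (exp_partial A t x N) <= ps (R * M0) (S N) * hs_norm x.
Proof.
  intro Ht. assert (HR : 0 <= R) by (pose proof (Rabs_pos t); lra).
  pose proof M0_pos as HM. pose proof (norm_pos X x) as Hx.
  induction N.
  - simpl. unfold Rdiv. rewrite Rinv_1. lra.
  - cbn [exp_partial]. eapply Rle_trans; [apply hs_triangle|]. rewrite norm_scal.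
    change (ps (R * M0) (S (S N))) with (ps (R * M0) (S N) + (R * M0) ^ (S N) / INR (fact (S N))).
    assert (Hc : Rabs (t ^ S N / INR (fact (S N))) * hs_norm (Nat.iter (S N) A x)
                 <= (R * M0) ^ S N / INR (fact (S N)) * hs_norm x).
    { unfold Rdiv at 1; rewrite Rabs_mult, Rabs_inv, <- RPow_abs, (Rabs_pos_eq (INR _)) by (left; apply fact_pos).
      rewrite Rpow_mult_distr. unfold Rdiv.
      pose proof (fact_pos (S N)). pose proof (iter_bound (S N) x).
      assert (Rabs t ^ S N <= R ^ S N) by (apply pow_incr; split; [apply Rabs_pos|assumption]).
      assert (0 <= / INR (fact (S N))) by (left; apply Rinv_0_lt_compat; lra).
      assert (0 <= M0 ^ S N) by (apply pow_le; lra).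
      assert (0 <= Rabs t ^ S N) by (apply pow_le, Rabs_pos).
      apply Rle_trans with (R ^ S N * / INR (fact (S N)) * (M0 ^ S N * hs_norm x)).
      + apply Rmult_le_compat; try apply norm_pos; try (apply Rmult_le_pos; assumption).
        apply Rmult_le_compat_r; assumption. assumption.
      + right; ring. }
    lra.
Qed.

Lemma sub_self (x : X) : hs_norm (hs_sub x x) = 0.
Proof. unfold hs_sub. rewrite hs_add_opp. unfold hs_norm. destruct (zero_l X hs_zero) as [-> _]. apply sqrt_0. Qed.

Lemma vec_id (P Q w : X) (a b : R) :
  hs_sub (hs_add P (hs_scal (RtoC a) w)) (hs_add Q (hs_scal (RtoC b) w))
  = hs_add (hs_sub P Q) (hs_scal (RtoC (a - b)) w).
Proof. apply inner_ext. intro z. unfold hs_sub. isimp. simpl. split; ring. Qed.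

Lemma PQ_bound t s R x N : Rabs t <= R -> Rabs s <= R ->
  hs_norm (hs_sub (exp_partial A t x N) (exp_partial A s x N))
    <= Rabs (t - s) * M0 * ps (R * M0) N * hs_norm x.
Proof.
  intros Ht Hs. assert (HR : 0 <= R) by (pose proof (Rabs_pos t); lra).
  pose proof M0_pos as HM. pose proof (norm_pos X x) as Hx.
  induction N.
  - simpl. rewrite sub_self. lra.
  - cbn [exp_partial]. rewrite vec_id. eapply Rle_trans; [apply hs_triangle|]. rewrite norm_scal.
    assert (Hc : Rabs (t ^ S N / INR (fact (S N)) - s ^ S N / INR (fact (S N))) * hs_norm (Nat.iter (S N) A x)
                 <= Rabs (t - s) * M0 * ((R * M0) ^ N / INR (fact N)) * hs_norm x).
    { replace (t ^ S N / INR (fact (S N)) - s ^ S N / INR (fact (S N))) with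
        ((t ^ S N - s ^ S N) / INR (fact (S N))) by (field; apply not_0_INR, fact_neq_0).
      unfold Rdiv at 1; rewrite Rabs_mult, Rabs_inv, (Rabs_pos_eq (INR _)) by (left; apply fact_pos).
      pose proof (pow_diff t s R N Ht Hs). pose proof (iter_bound (S N) x).
      pose proof (fact_pos N).
      assert (Ef : INR (fact (S N)) = INR (S N) * INR (fact N)) by (rewrite fact_simpl, mult_INR; reflexivity).
      rewrite Ef. pose proof (lt_0_INR (S N) (Nat.lt_0_succ N)).
      apply Rle_trans with (INR (S N) * R ^ N * Rabs (t - s) / (INR (S N) * INR (fact N)) * (M0 ^ S N * hs_norm x)).
      + apply Rmult_le_compat; try apply norm_pos.
        * unfold Rdiv; apply Rmult_le_pos; [apply Rabs_pos|left; apply Rinv_0_lt_compat; nra].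
        * unfold Rdiv. apply Rmult_le_compat_r; [left; apply Rinv_0_lt_compat; nra|assumption].
        * assumption.
      + rewrite Rpow_mult_distr. right. change (M0 ^ S N) with (M0 * M0 ^ N). field. split; lra. }
    simpl ps. lra.
Qed.

Lemma cv_inner (u : nat -> X) l x : cv_X u l ->
  Un_cv (fun N => Re (hs_inner x (u N))) (Re (hs_inner x l)) /\
  Un_cv (fun N => Im (hs_inner x (u N))) (Im (hs_inner x l)).
Proof.
  intro H. pose proof (norm_pos X x) as Hx.
  split; intros eps Heps; destruct (H (eps / (hs_norm x + 1))) as [N HN];
    try (apply Rdiv_lt_0_compat; lra); exists N; intros n Hn; specialize (HN n Hn); unfold Rdist.
  - replace (Re (hs_inner x (u n)) - Re (hs_inner x l)) with (Re (hs_inner x (hs_sub (u n) l)))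
      by (unfold hs_sub; isimp; ring).
    eapply Rle_lt_trans; [apply CS_Re|].
    apply Rle_lt_trans with (hs_norm x * (eps / (hs_norm x + 1))).
    + apply Rmult_le_compat_l; [lra|left; assumption].
    + apply Rlt_le_trans with ((hs_norm x + 1) * (eps / (hs_norm x + 1))); [apply Rmult_lt_compat_r; [apply Rdiv_lt_0_compat; lra| lra] | right; field; lra].
  - replace (Im (hs_inner x (u n)) - Im (hs_inner x l)) with (Im (hs_inner x (hs_sub (u n) l)))
      by (unfold hs_sub; isimp; ring).
    eapply Rle_lt_trans; [apply CS_Im|].
    apply Rle_lt_trans with (hs_norm x * (eps / (hs_norm x + 1))).
    + apply Rmult_le_compat_l; [lra|left; assumption].
    + apply Rlt_le_trans with ((hs_norm x + 1) * (eps / (hs_norm x + 1))); [apply Rmult_lt_compat_r; [apply Rdiv_lt_0_compat; lra| lra] | right; field; lra].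
Qed.

Lemma cv_sum_cabs2 (l : list X) (z : X -> nat -> Defs.C) (w : X -> Defs.C) :
  (forall g, Un_cv (fun N => Re (z g N)) (Re (w g)) /\ Un_cv (fun N => Im (z g N)) (Im (w g))) ->
  Un_cv (fun N => sum_list (fun g => Cabs2 (z g N)) l) (sum_list (fun g => Cabs2 (w g)) l).
Proof.
  intro H. induction l as [|g l IH]; simpl.
  - intros eps He. exists O. intros. unfold Rdist. rewrite Rminus_0_r, Rabs_R0. lra.
  - apply CV_plus; [|exact IH]. unfold Cabs2. destruct (H g).
    apply CV_plus; apply CV_mult; assumption.
Qed.

Variable G : X -> Prop.
Hypothesis HB : is_bessel G (fun g => g).

Definition Cb : R := Rmax 0 (proj1_sig (constructive_indefinite_description _ HB)).
Lemma Cb_pos : 0 <= Cb. Proof. apply Rmax_l. Qed.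
Lemma bessel_Cb (y : X) l : NoDup l -> Forall G l ->
  sum_list (fun g => Cabs2 (hs_inner y g)) l <= Cb * hs_norm y ^ 2.
Proof.
  intros Hn Hf. unfold Cb. destruct (constructive_indefinite_description _ _) as [c Hc]. simpl.
  eapply Rle_trans; [apply (Hc y l Hn Hf)|]. apply Rmult_le_compat_r; [apply pow2_ge_0|apply Rmax_r].
Qed.

Lemma core_B t R x l : Rabs t <= R -> NoDup l -> Forall G l ->
  sum_list (fun g => Cabs2 (hs_inner x (E t g))) l <= Cb * exp (R * M0) ^ 2 * hs_norm x ^ 2.
Proof.
  intros Ht Hn Hf. assert (HR : 0 <= R) by (pose proof (Rabs_pos t); lra).
  apply limit_le with (fun N => sum_list (fun g => Cabs2 (hs_inner x (exp_partial Astar t g N))) l).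
  - apply cv_sum_cabs2. intro g. apply cv_inner. apply Hexp.
  - intro N. rewrite (sum_ext _ (fun g => Cabs2 (hs_inner (exp_partial A t x N) g))) by (intro g; rewrite adj_exp; reflexivity).
    eapply Rle_trans; [apply bessel_Cb; assumption|].
    rewrite Rmult_assoc, <- Rpow_mult_distr.
    apply Rmult_le_compat_l; [apply Cb_pos|]. apply pow_incr. split; [apply norm_pos|].
    eapply Rle_trans; [apply (P_bound t R)|]; [assumption|].
    apply Rmult_le_compat_r; [apply norm_pos|]. apply ps_le_exp. pose proof M0_pos; nra.
Qed.

Lemma core_L t s R x l : Rabs t <= R -> Rabs s <= R -> NoDup l -> Forall G l ->
  sum_list (fun g => Cabs2 (Csub (hs_inner x (E t g)) (hs_inner x (E s g)))) l
    <= Cb * (M0 * exp (R * M0)) ^ 2 * (t - s) ^ 2 * hs_norm x ^ 2.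
Proof.
  intros Ht Hs Hn Hf. assert (HR : 0 <= R) by (pose proof (Rabs_pos t); lra).
  apply limit_le with (fun N => sum_list (fun g => Cabs2 (Csub (hs_inner x (exp_partial Astar t g N))
                                                           (hs_inner x (exp_partial Astar s g N)))) l).
  - apply cv_sum_cabs2. intro g. destruct (cv_inner _ _ x (Hexp t g)), (cv_inner _ _ x (Hexp s g)).
    simpl. split; apply CV_minus; assumption.
  - intro N.
    rewrite (sum_ext _ (fun g => Cabs2 (hs_inner (hs_sub (exp_partial A t x N) (exp_partial A s x N)) g))).
    2:{ intro g. rewrite !adj_exp. f_equal. apply Ceq; unfold hs_sub; simpl; isimp; ring. }
    eapply Rle_trans; [apply bessel_Cb; assumption|].
    rewrite <- (pow2_abs (t - s)).
    rewrite !Rmult_assoc. apply Rmult_le_compat_l; [apply Cb_pos|].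
    rewrite <- !Rpow_mult_distr. apply pow_incr. split; [apply norm_pos|].
    eapply Rle_trans; [apply (PQ_bound t s R); assumption|].
    pose proof M0_pos. pose proof (norm_pos X x).
    assert (ps (R * M0) N <= exp (R * M0)) by (apply ps_le_exp; nra).
    idtac.
    assert (0 <= Rabs (t - s) * M0) by (apply Rmult_le_pos; [apply Rabs_pos|lra]).
    assert (0 <= ps (R * M0) N).
    { clear -H HR. induction N; simpl; [lra|]. assert (0 <= (R * M0) ^ N / INR (fact N)).
      { apply Rmult_le_pos; [apply pow_le; nra| left; apply Rinv_0_lt_compat, fact_pos]. } lra. }
    apply Rle_trans with (Rabs (t - s) * M0 * exp (R * M0) * hs_norm x); [|right; ring].
    apply Rmult_le_compat_r; [lra|]. apply Rmult_le_compat_l; lra.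
Qed.

End Core.


Lemma sum_list_app {J} (f : J -> R) l1 l2 : sum_list f (l1 ++ l2) = sum_list f l1 + sum_list f l2.
Proof. induction l1; simpl; [ring| rewrite IHl1; ring]. Qed.
Lemma sum_list_map {J K} (f : K -> R) (h : J -> K) l : sum_list f (map h l) = sum_list (fun j => f (h j)) l.
Proof. induction l; simpl; [reflexivity| rewrite IHl; reflexivity]. Qed.
Lemma sum_list_le {J} (f g : J -> R) l : (forall j, In j l -> f j <= g j) -> sum_list f l <= sum_list g l.
Proof.
  induction l; simpl; intros H; [lra|].
  pose proof (H a (or_introl eq_refl)). assert (sum_list f l <= sum_list g l) by (apply IHl; auto). lra.
Qed.
Lemma sum_list_lin {J} (f : J -> R) a b l : sum_list (fun j => a * f j + b) l = a * sum_list f l + b * INR (length l).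
Proof. induction l; simpl length; [simpl; ring| rewrite S_INR; simpl; rewrite IHl; ring]. Qed.
Lemma sum_list_nonneg {J} (f : J -> R) l : (forall j, 0 <= f j) -> 0 <= sum_list f l.
Proof. intro H. induction l; simpl; [lra| pose proof (H a); lra]. Qed.
Lemma sum_list_const {J} (c : R) (l : list J) : sum_list (fun _ => c) l = c * INR (length l).
Proof. induction l; simpl length; [simpl; ring| rewrite S_INR; simpl; rewrite IHl; ring]. Qed.

Lemma sum_sub_le {J} (w : J -> R) (lp L : list J) : NoDup lp -> (forall p, In p lp -> In p L) ->
  (forall p, 0 <= w p) -> sum_list w lp <= sum_list w L.
Proof.
  intros Hn. revert L. induction lp as [|a lp IH]; intros L Hin Hw.
  - simpl. apply sum_list_nonneg; assumption.
  - inversion Hn; subst. destruct (in_split a L (Hin a (or_introl eq_refl))) as [L1 [L2 ->]].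
    rewrite sum_list_app. simpl.
    assert (sum_list w lp <= sum_list w (L1 ++ L2)).
    { apply IH; [assumption| |assumption]. intros p Hp. specialize (Hin p (or_intror Hp)).
      apply in_app_or in Hin. apply in_or_app. destruct Hin as [|[<-|]]; auto. contradiction. }
    rewrite sum_list_app in H. lra.
Qed.

Definition pairs {J} (l : list J) (T : list R) : list (J * R) :=
  flat_map (fun t => map (fun g => (g, t)) l) T.

Lemma sum_pairs {J} (w : J * R -> R) l T :
  sum_list w (pairs l T) = sum_list (fun t => sum_list (fun g => w (g, t)) l) T.
Proof. induction T; simpl; [reflexivity| rewrite sum_list_app, sum_list_map, IHT; reflexivity]. Qed.

Lemma pairs_NoDup {J} (l : list J) T : NoDup l -> NoDup T -> NoDup (pairs l T).
Proof.
  intros Hl HT. induction HT; simpl; [constructor|].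
  apply NoDup_app; [| assumption |].
  - apply NoDup_map_NoDup_ForallPairs; [|assumption]. intros a b _ _ E. inversion E; reflexivity.
  - intros p H1 H2. apply in_map_iff in H1. destruct H1 as [g [<- _]].
    unfold pairs in H2. apply in_flat_map in H2. destruct H2 as [t' [Ht' Hm]].
    apply in_map_iff in Hm. destruct Hm as [g' [E _]]. inversion E; subst. contradiction.
Qed.

Lemma pairs_In {J} (l : list J) T p : In p (pairs l T) <-> In (fst p) l /\ In (snd p) T.
Proof.
  destruct p as [g t]. unfold pairs. rewrite in_flat_map. simpl. split.
  - intros [t' [Ht' Hm]]. apply in_map_iff in Hm. destruct Hm as [g' [E Hg]]. inversion E; subst. auto.
  - intros [Hg Ht]. exists t. split; [assumption|]. apply in_map_iff. exists g. auto.
Qed.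

Definition contf (f : R -> R) := forall t, continuity_pt f t.

Lemma RI_of f a b : contf f -> a <= b -> Riemann_integrable f a b.
Proof. intros Hf Hab. apply continuity_implies_RiemannInt; [assumption| intros; apply Hf]. Qed.

Lemma RInt_eq f a b (pr : Riemann_integrable f a b) : RInt f a b = RiemannInt pr.
Proof.
  unfold RInt. destruct (excluded_middle_informative _) as [H|H].
  - apply RiemannInt_P5.
  - exfalso. apply H. constructor. exact pr.
Qed.

Lemma RInt_chasles f a b c : contf f -> a <= b -> b <= c -> RInt f a b + RInt f b c = RInt f a c.
Proof.
  intros Hf H1 H2. rewrite (RInt_eq f a b (RI_of f a b Hf H1)), (RInt_eq f b c (RI_of f b c Hf H2)),
    (RInt_eq f a c (RI_of f a c Hf (Rle_trans _ _ _ H1 H2))). apply RiemannInt_P26.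
Qed.

Lemma RInt_mono f g a b : contf f -> contf g -> a <= b -> (forall t, a <= t <= b -> f t <= g t) ->
  RInt f a b <= RInt g a b.
Proof.
  intros Hf Hg Hab H. rewrite (RInt_eq f a b (RI_of f a b Hf Hab)), (RInt_eq g a b (RI_of g a b Hg Hab)).
  apply RiemannInt_P19; [assumption|]. intros t Ht; apply H; lra.
Qed.

Lemma cont_const c : contf (fun _ => c).
Proof. intro t. apply continuity_pt_const. intros u v; reflexivity. Qed.

Lemma RInt_const c a b : a <= b -> RInt (fun _ => c) a b = c * (b - a).
Proof.
  intro Hab. rewrite (RInt_eq _ a b (RI_of _ a b (cont_const c) Hab)).
  apply (RiemannInt_P15 (c := c)).
Qed.

Lemma RInt_nonneg f a b : contf f -> a <= b -> (forall t, 0 <= f t) -> 0 <= RInt f a b.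
Proof.
  intros Hf Hab H. apply Rle_trans with (RInt (fun _ => 0) a b).
  - rewrite RInt_const by assumption. lra.
  - apply RInt_mono; try assumption. apply cont_const. intros; apply H.
Qed.

Lemma cont_plus f g : contf f -> contf g -> contf (fun t => f t + g t).
Proof. intros Hf Hg t. apply (continuity_pt_plus f g t (Hf t) (Hg t)). Qed.
Lemma cont_mult f g : contf f -> contf g -> contf (fun t => f t * g t).
Proof. intros Hf Hg t. apply (continuity_pt_mult f g t (Hf t) (Hg t)). Qed.

Lemma RInt_plus f g a b : contf f -> contf g -> a <= b ->
  RInt (fun t => f t + g t) a b = RInt f a b + RInt g a b.
Proof.
  intros Hf Hg Hab.
  assert (E : (fun t => f t + g t) = (fun t => f t + 1 * g t)) by (apply functional_extensionality; intro; ring).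
  rewrite E, (RInt_eq _ a b (RI_of _ a b (cont_plus f (fun t => 1 * g t) Hf (cont_mult _ _ (cont_const 1) Hg)) Hab)),
     (RInt_eq f a b (RI_of f a b Hf Hab)), (RInt_eq g a b (RI_of g a b Hg Hab)).
  rewrite RiemannInt_P13 with (pr1 := RI_of f a b Hf Hab) (pr2 := RI_of g a b Hg Hab). ring.
Qed.

Lemma cont_sum {J} (f : J -> R -> R) l : (forall j, In j l -> contf (f j)) ->
  contf (fun t => sum_list (fun j => f j t) l).
Proof.
  induction l; simpl; intros H.
  - apply cont_const.
  - apply cont_plus; [apply H; auto| apply IHl; auto].
Qed.

Lemma RInt_sum {J} (f : J -> R -> R) l a b : a <= b -> (forall j, In j l -> contf (f j)) ->
  RInt (fun t => sum_list (fun j => f j t) l) a b = sum_list (fun j => RInt (f j) a b) l.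
Proof.
  intros Hab. induction l; simpl; intros H.
  - rewrite RInt_const by assumption. ring.
  - rewrite RInt_plus; [| apply H; auto | apply cont_sum; auto | assumption]. rewrite IHl; auto.
Qed.

Lemma lip_cont f t0 K : 0 <= K -> (forall s, Rabs (s - t0) <= 1 -> Rabs (f s - f t0) <= K * Rabs (s - t0)) ->
  continuity_pt f t0.
Proof.
  intros HK H eps Heps. exists (Rmin 1 (eps / (K + 1))). split.
  - apply Rmin_pos; [lra| apply Rdiv_lt_0_compat; lra].
  - intros s [_ Hs]. simpl in *. unfold Rdist in *.
    pose proof (Rmin_l 1 (eps / (K + 1))). pose proof (Rmin_r 1 (eps / (K + 1))).
    eapply Rle_lt_trans; [apply H; lra|].
    apply Rle_lt_trans with (K * (eps / (K + 1))).
    + apply Rmult_le_compat_l; lra.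
    + apply Rlt_le_trans with ((K + 1) * (eps / (K + 1))); [|right; field; lra].
      apply Rmult_lt_compat_r; [apply Rdiv_lt_0_compat; lra| lra].
Qed.


Fixpoint chainb (P : R -> R -> Prop) (T : list R) (b : R) : Prop :=
  match T with nil => True | t :: r => P t (hd b r) /\ chainb P r b end.

Fixpoint chain2 (P : R -> R -> Prop) (T : list R) : Prop :=
  match T with
  | a :: ((c :: _) as r) => P a c /\ chain2 P r
  | _ => True
  end.

Lemma chainb_nth P T b : T <> nil ->
  (forall i, (S i < length T)%nat -> P (nth i T 0) (nth (S i) T 0)) ->
  P (nth (length T - 1) T 0) b -> chainb P T b.
Proof.
  induction T as [|a r IH]; intros Hne H Hl; [contradiction|].
  destruct r as [|c r'].
  - simpl in *. split; [exact Hl| exact I].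
  - simpl. split.
    + apply (H 0%nat). simpl; lia.
    + apply IH; [discriminate| |].
      * intros i Hi. apply (H (S i)). simpl in *; lia.
      * simpl length in *. replace (S (length r') - 1)%nat with (length r') by lia.
        replace (S (S (length r')) - 1)%nat with (S (length r')) in Hl by lia. exact Hl.
Qed.

Lemma chain2_nth P T :
  (forall i, (S i < length T)%nat -> P (nth i T 0) (nth (S i) T 0)) -> chain2 P T.
Proof.
  induction T as [|a r IH]; intros H; [exact I|].
  destruct r as [|c r']; [exact I|]. split.
  - apply (H 0%nat). simpl; lia.
  - apply IH. intros i Hi. apply (H (S i)). simpl in *; lia.
Qed.

Lemma chain2_mono (P Q : R -> R -> Prop) T : (forall a b, P a b -> Q a b) -> chain2 P T -> chain2 Q T.
Proof.
  intros HPQ. induction T as [|a r IH]; [auto|]. destruct r as [|c r']; [auto|].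
  simpl. intros [H1 H2]. split; [auto| apply IH; exact H2].
Qed.

Lemma chain2_gap T : chain2 (fun a b => a < b) T -> exists d, d > 0 /\ chain2 (fun a b => a + d <= b) T.
Proof.
  induction T as [|a r IH]; intros H; [exists 1; split; [lra|exact I]|].
  destruct r as [|c r']; [exists 1; split; [lra| exact I]|].
  destruct H as [H1 H2]. destruct (IH H2) as [d [Hd Hc]].
  exists (Rmin d (c - a)). split; [apply Rmin_pos; lra|]. split.
  - pose proof (Rmin_r d (c - a)). lra.
  - eapply chain2_mono; [|exact Hc]. intros x y Hxy. pose proof (Rmin_l d (c - a)). lra.
Qed.

Lemma chain2_all d a r : 0 <= d -> chain2 (fun a b => a + d <= b) (a :: r) -> forall t, In t r -> a + d <= t.
Proof.
  intros Hd. revert a. induction r as [|c r' IH]; intros a H t Ht; [destruct Ht|].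
  destruct H as [H1 H2]. destruct Ht as [<-|Ht]; [assumption|].
  pose proof (IH c H2 t Ht). lra.
Qed.

Lemma chain2_NoDup d T : 0 < d -> chain2 (fun a b => a + d <= b) T -> NoDup T.
Proof.
  intros Hd. induction T as [|a r IH]; intros H; constructor.
  - intro Hin. pose proof (chain2_all d a r (Rlt_le _ _ Hd) H a Hin). lra.
  - apply IH. destruct r; [exact I| exact (proj2 H)].
Qed.

Lemma chainb_le T b : chainb (fun a c => a <= c) T b -> forall t, In t T -> t <= b.
Proof.
  induction T as [|a r IH]; intros H t Ht; [destruct Ht|]. destruct H as [H1 H2].
  assert (Hh : hd b r <= b).
  { destruct r as [|c r']; simpl; [lra| apply IH; [assumption| left; reflexivity]]. }
  destruct Ht as [<-|Ht]; [lra| apply IH; assumption].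
Qed.

Lemma chainb_ge T b : chainb (fun a c => a <= c) T b -> forall t, In t T -> hd b T <= t.
Proof.
  induction T as [|a r IH]; intros H t Ht; [destruct Ht|]. destruct H as [H1 H2].
  simpl. destruct Ht as [<-|Ht]; [lra|].
  pose proof (IH H2 t Ht). lra.
Qed.

Lemma chainb_mono (P Q : R -> R -> Prop) T b : (forall a c, P a c -> Q a c) -> chainb P T b -> chainb Q T b.
Proof. intros HPQ. induction T; simpl; [auto| intros [H1 H2]; split; auto]. Qed.

Section IntEst.
Variables (F : R -> R) (tau c delta : R).
Hypothesis Fc : contf F.
Hypothesis Fpos : forall t, 0 <= F t.
Hypothesis Hc : 0 <= c.

Lemma RInt_zero a : RInt F a a = 0.
Proof. pose proof (RInt_chasles F a a a Fc (Rle_refl a) (Rle_refl a)). lra. Qed.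

Lemma hd_in b r : (forall t, In t r -> 0 <= t <= b) -> 0 <= b -> 0 <= hd b r <= b.
Proof. intros H Hb. destruct r as [|c0 r']; simpl; [lra| apply H; left; reflexivity]. Qed.

Lemma int_upper :
  0 <= tau ->
  (forall u t, 0 <= u <= tau -> 0 <= t <= tau -> F u <= 2 * F t + c * (u - t) ^ 2) ->
  forall T, chainb (fun a b => a <= b /\ b - a < delta) T tau -> (forall t, In t T -> 0 <= t <= tau) ->
  RInt F (hd tau T) tau <= 2 * delta * sum_list F T + c * delta ^ 2 * (tau - hd tau T).
Proof.
  intros Htau Hb. induction T as [|t r IH]; intros Hch Hin.
  - simpl. rewrite RInt_zero. lra.
  - destruct Hch as [[H1 H2] Hch]. simpl hd. simpl sum_list.
    assert (Ht : 0 <= t <= tau) by (apply Hin; left; reflexivity).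
    assert (Hr : forall u, In u r -> 0 <= u <= tau) by (intros; apply Hin; right; assumption).
    pose proof (hd_in tau r Hr Htau) as Hh.
    rewrite <- (RInt_chasles F t (hd tau r) tau Fc H1 (proj2 Hh)).
    assert (Hd : 0 <= delta) by lra.
    assert (I1 : RInt F t (hd tau r) <= RInt (fun _ => 2 * F t + c * delta ^ 2) t (hd tau r)).
    { apply RInt_mono; [assumption| apply cont_const| assumption|]. intros u Hu.
      eapply Rle_trans; [apply (Hb u t); split; lra|]. apply Rplus_le_compat_l. apply Rmult_le_compat_l; [assumption|].
      apply pow_incr. split; lra. }
    rewrite RInt_const in I1 by assumption.
    specialize (IH Hch Hr). pose proof (Fpos t).
    assert ((2 * F t + c * delta ^ 2) * (hd tau r - t) <= 2 * delta * F t + c * delta ^ 2 * (hd tau r - t)).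
    { assert (0 <= c * delta ^ 2) by (apply Rmult_le_pos; [assumption| apply pow2_ge_0]). nra. }
    lra.
Qed.

Variable s : R.
Definition phi (t : R) := t * (tau - s) / tau.

Lemma int_lower d :
  0 < s -> s < tau -> s * tau <= d * (tau - s) -> 0 <= d ->
  (forall u t, 0 <= u <= tau -> 0 <= t <= tau -> F t / 2 - c * (u - t) ^ 2 <= F u) ->
  forall T lo, chain2 (fun a b => a + d <= b) T -> (forall t, In t T -> 0 <= t <= tau) ->
  (forall t, In t T -> lo <= phi t) -> lo <= tau ->
  sum_list (fun t => s * (F t / 2 - c * s ^ 2)) T <= RInt F lo tau.
Proof.
  intros Hs1 Hs2 Hsd Hd Hb. induction T as [|t r IH]; intros lo Hch Hin Hlo Hlt.
  - simpl. apply RInt_nonneg; assumption.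
  - simpl sum_list.
    assert (Ht : 0 <= t <= tau) by (apply Hin; left; reflexivity).
    assert (Htau : 0 < tau) by lra.
    assert (Hp0 : 0 <= phi t) by (unfold phi; apply Rmult_le_pos; [apply Rmult_le_pos; lra| left; apply Rinv_0_lt_compat; lra]).
    assert (Hp1 : phi t + s <= tau).
    { unfold phi. apply Rle_trans with (tau * (tau - s) / tau + s); [|right; field; lra].
      apply Rplus_le_compat_r. unfold Rdiv. apply Rmult_le_compat_r; [left; apply Rinv_0_lt_compat; lra|].
      apply Rmult_le_compat_r; lra. }
    assert (Hp2 : t - s <= phi t <= t).
    { unfold phi. split.
      - apply Rle_trans with (t - t * s / tau); [| right; field; lra].
        assert (t * s / tau <= s).
        { apply Rle_trans with (tau * s / tau); [| right; field; lra]. unfold Rdiv.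
          apply Rmult_le_compat_r; [left; apply Rinv_0_lt_compat; lra|]. apply Rmult_le_compat_r; lra. }
        lra.
      - apply Rle_trans with (t - t * s / tau); [right; field; lra|].
        assert (0 <= t * s / tau) by (apply Rmult_le_pos; [apply Rmult_le_pos; lra| left; apply Rinv_0_lt_compat; lra]).
        lra. }
    assert (Hlo0 : lo <= phi t) by (apply Hlo; left; reflexivity).
    rewrite <- (RInt_chasles F lo (phi t) tau Fc Hlo0 (Rle_trans _ _ _ (Rle_trans _ _ _ (proj2 Hp2) (proj2 Ht)) (Rle_refl _))).
    rewrite <- (RInt_chasles F (phi t) (phi t + s) tau Fc ltac:(lra) Hp1).
    assert (I0 : 0 <= RInt F lo (phi t)) by (apply RInt_nonneg; assumption).
    assert (I1 : RInt (fun _ => F t / 2 - c * s ^ 2) (phi t) (phi t + s) <= RInt F (phi t) (phi t + s)).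
    { apply RInt_mono; [apply cont_const| assumption| lra|]. intros u Hu.
      eapply Rle_trans; [|apply (Hb u t); lra]. apply Rplus_le_compat_l, Ropp_le_contravar.
      apply Rmult_le_compat_l; [assumption|]. rewrite <- (pow2_abs (u - t)). apply pow_incr.
      split; [apply Rabs_pos|]. apply Rabs_le. lra. }
    rewrite RInt_const in I1 by lra.
    assert (I2 : sum_list (fun t0 => s * (F t0 / 2 - c * s ^ 2)) r <= RInt F (phi t + s) tau).
    { apply IH; [destruct r; [exact I| exact (proj2 Hch)] | intros; apply Hin; right; assumption| | assumption].
      intros t' Ht'. pose proof (chain2_all d t r Hd Hch t' Ht').
      unfold phi. apply Rle_trans with (t * (tau - s) / tau + d * (tau - s) / tau).
      - apply Rplus_le_compat_l. apply Rle_trans with (s * tau / tau); [right; field; lra|].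
        unfold Rdiv. apply Rmult_le_compat_r; [left; apply Rinv_0_lt_compat; lra| assumption].
      - unfold Rdiv. rewrite <- Rmult_plus_distr_r, <- Rmult_plus_distr_r.
        apply Rmult_le_compat_r; [left; apply Rinv_0_lt_compat; lra|]. apply Rmult_le_compat_r; lra. }
    replace (phi t + s - phi t) with s in I1 by ring. simpl pow in *. lra.
Qed.
End IntEst.


Lemma sample_facts tau T : sample_set tau T ->
  T <> nil /\ hd tau T = 0 /\ (forall t, In t T -> 0 <= t <= tau) /\
  exists d, d > 0 /\ chain2 (fun a b => a + d <= b) T.
Proof.
  intros [Hl [H0 [Hinc Hlast]]].
  assert (Hne : T <> nil) by (intro E; subst; simpl in Hl; lia).
  assert (Hhd : hd tau T = 0) by (destruct T; [contradiction| exact H0]).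
  assert (Hcb : chainb (fun a c => a <= c) T tau).
  { apply chainb_nth; [assumption| |assumption]. intros i Hi. left; apply Hinc; assumption. }
  split; [assumption|]. split; [assumption|]. split.
  - intros t Ht. split.
    + rewrite <- Hhd. apply chainb_ge; assumption.
    + apply (chainb_le T); assumption.
  - apply chain2_gap. apply chain2_nth. assumption.
Qed.

Lemma mesh_chain tau delta T : sample_set tau T -> mesh_lt tau delta T ->
  chainb (fun a b => a <= b /\ b - a < delta) T tau.
Proof.
  intros [Hl [H0 [Hinc Hlast]]] [Hm Hml].
  assert (Hne : T <> nil) by (intro E; subst; simpl in Hl; lia).
  apply chainb_nth; [assumption| |].
  - intros i Hi. specialize (Hinc i Hi). specialize (Hm i Hi). apply Rabs_def2 in Hm. split; lra.
  - apply Rabs_def2 in Hml. split; lra.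
Qed.

Lemma uniform_T tau delta : 0 < tau -> 0 < delta ->
  exists T, sample_set tau T /\ mesh_lt tau delta T.
Proof.
  intros Ht Hd.
  destruct (archimed (tau / delta)) as [Hup _].
  assert (Hpos : (0 < up (tau / delta))%Z).
  { apply lt_IZR. assert (0 < tau / delta) by (apply Rdiv_lt_0_compat; lra). simpl. lra. }
  set (N := Z.to_nat (up (tau / delta))).
  assert (HN : INR N = IZR (up (tau / delta))).
  { unfold N. rewrite INR_IZR_INZ, Z2Nat.id by lia. reflexivity. }
  assert (HN1 : (1 <= N)%nat) by (unfold N; lia).
  assert (HNp : 0 < INR N) by (apply lt_0_INR; lia).
  set (h := tau / INR N).
  assert (Hh : 0 < h) by (apply Rdiv_lt_0_compat; lra).
  assert (Hhd : h < delta).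
  { unfold h. apply Rmult_lt_reg_r with (INR N); [lra|].
    replace (tau / INR N * INR N) with tau by (field; lra).
    apply Rmult_lt_reg_l with (/ delta); [apply Rinv_0_lt_compat; lra|].
    replace (/ delta * tau) with (tau / delta) by (unfold Rdiv; ring).
    replace (/ delta * (delta * INR N)) with (INR N) by (field; lra). lra. }
  exists (map (fun i => INR i * h) (seq 0 N)).
  assert (Hlen : length (map (fun i => INR i * h) (seq 0 N)) = N) by (rewrite length_map, length_seq; reflexivity).
  assert (Hnth : forall i, (i < N)%nat -> nth i (map (fun i => INR i * h) (seq 0 N)) 0 = INR i * h).
  { intros i Hi. rewrite nth_indep with (d' := INR 0 * h) by (rewrite Hlen; assumption).
    pose proof (map_nth (fun i => INR i * h) (seq 0 N) 0%nat i) as Hm. cbv beta in Hm. rewrite Hm, seq_nth by assumption. reflexivity. }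
  assert (Hlast : INR (N - 1) * h = tau - h).
  { rewrite minus_INR by assumption. unfold h. simpl INR. field. lra. }
  split; [split; [|split; [|split]] | split].
  - rewrite Hlen. assumption.
  - rewrite Hnth by lia. simpl. ring.
  - intros i Hi. rewrite Hlen in Hi. rewrite !Hnth by lia. rewrite S_INR. lra.
  - rewrite Hlen, Hnth by lia. lra.
  - intros i Hi. rewrite Hlen in Hi. rewrite !Hnth by lia. rewrite S_INR.
    replace ((INR i + 1) * h - INR i * h) with h by ring. rewrite Rabs_pos_eq; lra.
  - rewrite Hlen, Hnth by lia. rewrite Hlast. replace (tau - (tau - h)) with h by ring. rewrite Rabs_pos_eq; lra.
Qed.


Lemma Cabs2_pos z : 0 <= Cabs2 z.
Proof. unfold Cabs2. pose proof (Rle_0_sqr (Re z)); pose proof (Rle_0_sqr (Im z)); unfold Rsqr in *; lra. Qed.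

Lemma Cabs2_tri a b : Cabs2 a <= 2 * Cabs2 b + 2 * Cabs2 (Csub a b).
Proof. unfold Cabs2, Csub; simpl. pose proof (Rle_0_sqr (Re a - 2 * Re b)). pose proof (Rle_0_sqr (Im a - 2 * Im b)). unfold Rsqr in *. nra. Qed.

Lemma sum_list_plus {J} (f g : J -> R) l : sum_list (fun j => f j + g j) l = sum_list f l + sum_list g l.
Proof. induction l; simpl; [ring| rewrite IHl; ring]. Qed.
Lemma sum_list_scal {J} (f : J -> R) a l : sum_list (fun j => a * f j) l = a * sum_list f l.
Proof. induction l; simpl; [ring| rewrite IHl; ring]. Qed.

Section Main.
Variable X : HilbertSpace.
Variables (A Astar : X -> X) (E : R -> X -> X) (G : X -> Prop) (tau : R).
Hypothesis HA : is_bounded_op A.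
Hypothesis Hadj : is_adjoint A Astar.
Hypothesis Hexp : is_exp Astar E.
Hypothesis Htau : 0 < tau.
Hypothesis HB : is_bessel G (fun g => g).

Definition KL (R0 : R) := Cb X G HB * (M0 X A HA * exp (R0 * M0 X A HA)) ^ 2.
Definition KB := Cb X G HB * exp (tau * M0 X A HA) ^ 2.
Lemma KL_pos R0 : 0 <= KL R0.
Proof. unfold KL. apply Rmult_le_pos; [apply Cb_pos| apply pow2_ge_0]. Qed.
Lemma KB_pos : 0 <= KB.
Proof. unfold KB. apply Rmult_le_pos; [apply Cb_pos| apply pow2_ge_0]. Qed.

Definition Fl (x : X) (l : list X) (t : R) := sum_list (fun g => Cabs2 (hs_inner x (E t g))) l.

Lemma Fl_pos x l t : 0 <= Fl x l t.
Proof. apply sum_list_nonneg. intro; apply Cabs2_pos. Qed.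

Lemma lip_part (p : R -> R) (x : X) t0 K : 0 <= K ->
  (forall s, Rabs (s - t0) <= 1 -> (p s - p t0) ^ 2 <= K * (s - t0) ^ 2 * hs_norm x ^ 2) ->
  continuity_pt p t0.
Proof.
  intros HK H. apply (lip_cont p t0 (sqrt K * hs_norm x)).
  { apply Rmult_le_pos; [apply sqrt_pos| apply norm_pos]. }
  intros s Hs. specialize (H s Hs).
  replace (sqrt K * hs_norm x * Rabs (s - t0)) with (Rabs (sqrt K * hs_norm x * (s - t0))).
  - apply Rsqr_le_abs_0. unfold Rsqr.
    replace (sqrt K * hs_norm x * (s - t0) * (sqrt K * hs_norm x * (s - t0)))
      with ((sqrt K * sqrt K) * ((s - t0) ^ 2 * hs_norm x ^ 2)) by ring.
    rewrite sqrt_sqrt by assumption. simpl pow in H. simpl pow. lra.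
  - rewrite !Rabs_mult, (Rabs_pos_eq (sqrt K)) by apply sqrt_pos. rewrite (Rabs_pos_eq (hs_norm x)) by apply norm_pos. reflexivity.
Qed.

Lemma cont_fg x g : G g -> contf (fun t => Cabs2 (hs_inner x (E t g))).
Proof.
  intros Hg t0.
  set (R0 := Rabs t0 + 1).
  assert (Hcore : forall s, Rabs (s - t0) <= 1 ->
     Cabs2 (Csub (hs_inner x (E s g)) (hs_inner x (E t0 g))) <= KL R0 * (s - t0) ^ 2 * hs_norm x ^ 2).
  { intros s Hs. pose proof (core_L X A Astar E HA Hadj Hexp G HB s t0 R0 x (g :: nil)) as H.
    simpl sum_list in H. rewrite Rplus_0_r in H. apply H.
    - unfold R0. pose proof (Rabs_triang_inv s t0). pose proof (Rabs_triang (s - t0) t0).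
      replace (s - t0 + t0) with s in H1 by ring. lra.
    - unfold R0; lra.
    - constructor; [intros []| constructor].
    - constructor; [assumption| constructor]. }
  unfold Cabs2. apply continuity_pt_plus; apply continuity_pt_mult.
  all: first [ apply (lip_part (fun t => Re (hs_inner x (E t g))) x t0 (KL R0) (KL_pos R0))
             | apply (lip_part (fun t => Im (hs_inner x (E t g))) x t0 (KL R0) (KL_pos R0)) ].
  all: intros s Hs; eapply Rle_trans; [|apply (Hcore s Hs)]; unfold Cabs2, Csub; simpl; rewrite Rmult_1_r; match goal with |- ?a * ?a <= ?b * ?b + ?c * ?c => pose proof (Rle_0_sqr a); pose proof (Rle_0_sqr b); pose proof (Rle_0_sqr c); unfold Rsqr in *; lra end.
Qed.

Lemma cont_Fl x l : Forall G l -> contf (Fl x l).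
Proof.
  intros Hf. unfold Fl. apply (cont_sum (fun g t => Cabs2 (hs_inner x (E t g)))).
  intros g Hg. apply cont_fg. rewrite Forall_forall in Hf. auto.
Qed.

Lemma Fl_bound x l t : NoDup l -> Forall G l -> 0 <= t <= tau -> Fl x l t <= KB * hs_norm x ^ 2.
Proof.
  intros Hn Hf Ht. apply (core_B X A Astar E HA Hadj Hexp G HB t tau x l); try assumption.
  rewrite Rabs_pos_eq; lra.
Qed.

Lemma Fl_up x l u t : NoDup l -> Forall G l -> 0 <= u <= tau -> 0 <= t <= tau ->
  Fl x l u <= 2 * Fl x l t + 2 * KL tau * hs_norm x ^ 2 * (u - t) ^ 2.
Proof.
  intros Hn Hf Hu Ht. unfold Fl.
  pose proof (core_L X A Astar E HA Hadj Hexp G HB u t tau x l) as H.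
  assert (H' : sum_list (fun g => Cabs2 (Csub (hs_inner x (E u g)) (hs_inner x (E t g)))) l
               <= KL tau * (u - t) ^ 2 * hs_norm x ^ 2).
  { apply H; try assumption; rewrite Rabs_pos_eq; lra. }
  eapply Rle_trans.
  { apply (sum_list_le _ (fun g => 2 * Cabs2 (hs_inner x (E t g)) + 2 * Cabs2 (Csub (hs_inner x (E u g)) (hs_inner x (E t g))))).
    intros; apply Cabs2_tri. }
  rewrite sum_list_plus, !sum_list_scal. lra.
Qed.

Lemma Fl_low x l u t : NoDup l -> Forall G l -> 0 <= u <= tau -> 0 <= t <= tau ->
  Fl x l t / 2 - KL tau * hs_norm x ^ 2 * (u - t) ^ 2 <= Fl x l u.
Proof.
  intros Hn Hf Hu Ht. pose proof (Fl_up x l t u Hn Hf Ht Hu).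
  replace ((t - u) ^ 2) with ((u - t) ^ 2) in H by ring. lra.
Qed.

Definition Xdec : forall x y : X, {x = y} + {x <> y} := fun x y => excluded_middle_informative (x = y).

Lemma lp_sub (T : list R) (lp : list (X * R)) :
  Forall (fun p => G (fst p) /\ In (snd p) T) lp ->
  let l := nodup Xdec (map fst lp) in
  NoDup l /\ Forall G l /\ forall p, In p lp -> In p (pairs l T).
Proof.
  intros Hf l. rewrite Forall_forall in Hf. split; [apply NoDup_nodup|]. split.
  - apply Forall_forall. intros g Hg. unfold l in Hg. apply nodup_In, in_map_iff in Hg.
    destruct Hg as [p [<- Hp]]. apply (Hf p Hp).
  - intros p Hp. apply pairs_In. split.
    + unfold l. apply nodup_In, in_map. assumption.
    + apply (Hf p Hp).
Qed.

Lemma sum_lp_le (T : list R) (lp : list (X * R)) x :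
  NoDup lp -> Forall (fun p => G (fst p) /\ In (snd p) T) lp ->
  let l := nodup Xdec (map fst lp) in
  sum_list (fun p => Cabs2 (hs_inner x (E (snd p) (fst p)))) lp <= sum_list (Fl x l) T.
Proof.
  intros Hn Hf l. destruct (lp_sub T lp Hf) as [_ [_ Hin]].
  eapply Rle_trans.
  - apply sum_sub_le; [assumption| apply Hin| intro; apply Cabs2_pos].
  - rewrite sum_pairs. right. reflexivity.
Qed.

Lemma RInt_Fl x l : Forall G l ->
  sum_list (fun g => RInt (fun t => Cabs2 (hs_inner x (E t g))) 0 tau) l = RInt (Fl x l) 0 tau.
Proof.
  intros Hf. unfold Fl. rewrite (RInt_sum (fun g t => Cabs2 (hs_inner x (E t g)))); [reflexivity| lra|].
  intros g Hg. apply cont_fg. rewrite Forall_forall in Hf. auto.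
Qed.

Lemma I12 : semicont_frame E G tau ->
  exists delta, delta > 0 /\ forall T : list R,
    sample_set tau T -> mesh_lt tau delta T -> disc_frame E G T.
Proof.
  intros [c1 [c2 [Hc1 [Hc2 Hsc]]]].
  set (L := KL tau). pose proof (KL_pos tau) as HL. fold L in HL.
  set (delta := sqrt (c1 / (4 * tau * (L + 1)))).
  assert (Hq : 0 < c1 / (4 * tau * (L + 1))) by (apply Rdiv_lt_0_compat; [lra| nra]).
  assert (Hd : delta > 0) by (apply sqrt_lt_R0; assumption).
  assert (Hd2 : delta ^ 2 = c1 / (4 * tau * (L + 1))) by (unfold delta; rewrite pow2_sqrt; lra).
  assert (HLd : 2 * L * delta ^ 2 * tau <= c1 / 2).
  { rewrite Hd2. apply Rle_trans with (c1 / 2 * (L / (L + 1))); [right; field; lra|].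
    assert (L / (L + 1) <= 1) by (apply Rle_trans with ((L + 1) / (L + 1)); [unfold Rdiv; apply Rmult_le_compat_r; [left; apply Rinv_0_lt_compat; lra| lra]| right; field; lra]).
    nra. }
  exists delta. split; [assumption|]. intros T HT Hm.
  destruct (sample_facts tau T HT) as [Hne [Hhd [Hin [d0 [Hd0 Hg0]]]]].
  pose proof (mesh_chain tau delta T HT Hm) as Hch.
  unfold disc_frame, is_frame. split.
  - exists (INR (length T) * KB). intros x lp Hn Hf.
    eapply Rle_trans; [apply (sum_lp_le T); assumption|].
    destruct (lp_sub T lp Hf) as [Hn' [Hf' _]].
    eapply Rle_trans; [apply (sum_list_le _ (fun _ => KB * hs_norm x ^ 2)); intros t Ht; apply Fl_bound; auto|].
    rewrite sum_list_const. right; ring.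
  - exists (c1 / (4 * delta)). split; [apply Rdiv_lt_0_compat; lra|].
    intros x eps Heps.
    destruct (proj1 (Hsc x) (2 * delta * eps)) as [l [Hn [Hf Hgt]]]; [nra|].
    rewrite RInt_Fl in Hgt by assumption.
    pose proof (norm_pos X x) as Hx.
    assert (Hup := int_upper (Fl x l) tau (2 * L * hs_norm x ^ 2) delta (cont_Fl x l Hf) (Fl_pos x l)
                    ltac:(apply Rmult_le_pos; [lra| apply pow2_ge_0]) ltac:(lra)
                    ltac:(intros u t Hu Ht; unfold L; apply Fl_up; assumption)
                    T Hch Hin).
    rewrite Hhd in Hup.
    exists (pairs l T). split; [apply pairs_NoDup; [assumption| apply (chain2_NoDup d0 T Hd0 Hg0)]|]. split.
    + apply Forall_forall. intros p Hp. apply pairs_In in Hp. rewrite Forall_forall in Hf. split; [apply Hf|]; tauto.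
    + rewrite sum_pairs. cbn [fst snd]. change (sum_list (fun t => sum_list (fun g => Cabs2 (hs_inner x (E t g))) l) T) with (sum_list (Fl x l) T).
      set (S := sum_list (Fl x l) T) in *.
      assert (2 * delta * S > 2 * delta * (c1 / (4 * delta) * hs_norm x ^ 2 - eps)).
      { replace (2 * delta * (c1 / (4 * delta) * hs_norm x ^ 2 - eps)) with (c1 / 2 * hs_norm x ^ 2 - 2 * delta * eps) by (field; lra).
        assert (2 * L * hs_norm x ^ 2 * delta ^ 2 * (tau - 0) <= c1 / 2 * hs_norm x ^ 2).
        { replace (2 * L * hs_norm x ^ 2 * delta ^ 2 * (tau - 0)) with ((2 * L * delta ^ 2 * tau) * hs_norm x ^ 2) by ring.
          apply Rmult_le_compat_r; [apply pow2_ge_0| assumption]. }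
        lra. }
      apply Rmult_lt_reg_l with (2 * delta); lra.
Qed.

Lemma I23 : (exists delta, delta > 0 /\ forall T : list R,
    sample_set tau T -> mesh_lt tau delta T -> disc_frame E G T) ->
  exists T : list R, sample_set tau T /\ disc_frame E G T.
Proof.
  intros [delta [Hd H]]. destruct (uniform_T tau delta Htau Hd) as [T [Hs Hm]].
  exists T. split; [assumption| apply H; assumption].
Qed.

Lemma I31 : (exists T : list R, sample_set tau T /\ disc_frame E G T) -> semicont_frame E G tau.
Proof.
  intros [T [HT [_ [c0 [Hc0 Hlow]]]]].
  destruct (sample_facts tau T HT) as [Hne [Hhd [Hin [d [Hd Hch]]]]].
  set (L := KL tau). pose proof (KL_pos tau) as HL. fold L in HL.
  set (nT := INR (length T)). assert (HnT : 0 <= nT) by apply pos_INR.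
  set (s1 := d * tau / (tau + d)). set (s3 := sqrt (c0 / (4 * (nT * L + 1)))).
  assert (Hs1 : 0 < s1) by (apply Rdiv_lt_0_compat; nra).
  assert (Hq : 0 < c0 / (4 * (nT * L + 1))) by (apply Rdiv_lt_0_compat; nra).
  assert (Hs3 : 0 < s3) by (apply sqrt_lt_R0; assumption).
  set (s := Rmin s1 (Rmin (tau / 2) s3)).
  assert (Hs0 : 0 < s) by (apply Rmin_pos; [assumption| apply Rmin_pos; lra]).
  assert (Hsa : s <= s1) by apply Rmin_l.
  assert (Hsb : s <= tau / 2) by (eapply Rle_trans; [apply Rmin_r| apply Rmin_l]).
  assert (Hsc : s <= s3) by (eapply Rle_trans; [apply Rmin_r| apply Rmin_r]).
  assert (Hsd : s * tau <= d * (tau - s)).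
  { assert (s * (tau + d) <= d * tau).
    { apply Rle_trans with (s1 * (tau + d)); [apply Rmult_le_compat_r; lra| unfold s1; right; field; lra]. }
    lra. }
  assert (Hsm : nT * L * s ^ 2 <= c0 / 4).
  { assert (Hs2 : s ^ 2 <= c0 / (4 * (nT * L + 1))).
    { rewrite <- (pow2_sqrt (c0 / (4 * (nT * L + 1)))) by lra. apply pow_incr. fold s3. lra. }
    apply Rle_trans with ((nT * L + 1) * s ^ 2).
    - assert (0 <= s ^ 2) by apply pow2_ge_0. nra.
    - apply Rle_trans with ((nT * L + 1) * (c0 / (4 * (nT * L + 1)))).
      + apply Rmult_le_compat_l; nra.
      + right; field; nra. }
  exists (s * c0 / 8), (tau * KB + 1). pose proof KB_pos.
  split; [apply Rdiv_lt_0_compat; nra|]. split; [nra|]. intro x.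
  pose proof (norm_pos X x) as Hx. assert (Hx2 : 0 <= hs_norm x ^ 2) by apply pow2_ge_0.
  split.
  - intros eps Heps. destruct (Hlow x (eps / s)) as [lp [Hn [Hf Hgt]]]; [apply Rdiv_lt_0_compat; lra|].
    destruct (lp_sub T lp Hf) as [Hnl [Hfl _]].
    assert (HS : c0 * hs_norm x ^ 2 - eps / s < sum_list (Fl x (nodup Xdec (map fst lp))) T).
    { eapply Rlt_le_trans; [exact Hgt| exact (sum_lp_le T lp x Hn Hf)]. }
    set (l := nodup Xdec (map fst lp)) in *.
    exists l. split; [assumption|]. split; [assumption|]. rewrite RInt_Fl by assumption.
    assert (Hlo := int_lower (Fl x l) tau (L * hs_norm x ^ 2) (cont_Fl x l Hfl) (Fl_pos x l)
               ltac:(apply Rmult_le_pos; assumption) s d Hs0 ltac:(lra) Hsd ltac:(lra)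
               ltac:(intros u t Hu Ht; unfold L; apply Fl_low; assumption)
               T 0 Hch Hin
               ltac:(intros t Ht; specialize (Hin t Ht); unfold phi; apply Rmult_le_pos;
                     [apply Rmult_le_pos; lra| left; apply Rinv_0_lt_compat; lra])
               ltac:(lra)).
    rewrite (sum_ext _ (fun t => (s / 2) * Fl x l t + (- (s * (L * hs_norm x ^ 2) * s ^ 2)))) in Hlo
      by (intro; field).
    rewrite sum_list_lin in Hlo. fold nT in Hlo.
    set (S := sum_list (Fl x l) T) in *.
    assert (A1 : s / 2 * S > s / 2 * (c0 * hs_norm x ^ 2) - eps / 2).
    { replace (s / 2 * (c0 * hs_norm x ^ 2) - eps / 2) with (s / 2 * (c0 * hs_norm x ^ 2 - eps / s)) by (field; lra).
      apply Rmult_lt_compat_l; lra. }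
    assert (A2 : s * (L * hs_norm x ^ 2) * s ^ 2 * nT <= s * hs_norm x ^ 2 * (c0 / 4)).
    { replace (s * (L * hs_norm x ^ 2) * s ^ 2 * nT) with (s * hs_norm x ^ 2 * (nT * L * s ^ 2)) by ring.
      apply Rmult_le_compat_l; [nra| assumption]. }
    assert (A3 : 0 <= s * c0 * hs_norm x ^ 2) by (apply Rmult_le_pos; [nra| assumption]).
    lra.
  - intros l Hn Hf. rewrite RInt_Fl by assumption.
    eapply Rle_trans.
    + apply (RInt_mono _ (fun _ => KB * hs_norm x ^ 2)); [apply cont_Fl; assumption| apply cont_const| lra|].
      intros t Ht. apply Fl_bound; assumption.
    + rewrite RInt_const by lra. nra.
Qed.

End Main.


Theorem theorem3p6 (X : HilbertSpace) (A Astar : X -> X) (E : R -> X -> X)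
  (G : X -> Prop) (tau : R) :
  is_bounded_op A -> is_adjoint A Astar -> is_exp Astar E ->
  0 < tau -> countable_set G -> is_bessel G (fun g => g) ->
  (semicont_frame E G tau <->
     (exists delta, delta > 0 /\ forall T : list R,
         sample_set tau T -> mesh_lt tau delta T -> disc_frame E G T)) /\
  ((exists delta, delta > 0 /\ forall T : list R,
         sample_set tau T -> mesh_lt tau delta T -> disc_frame E G T) <->
     (exists T : list R, sample_set tau T /\ disc_frame E G T)).
Proof.
  intros HA Hadj Hexp Htau _ HB. split; split; intro H.
  - eapply I12; eassumption.
  - eapply I31; try eassumption. eapply I23; eassumption.
  - eapply I23; eassumption.
  - eapply I12; try eassumption. eapply I31; eassumption.
Qed.
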